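(* Let $H$ be a pointed Hopf algebra and let $Q$ be the Ext-quiver of $\mathcal{M}^H$. Then at each vertex $v$ of $Q$, the number of arrows ending at $v$ equals the number of arrows starting at $v$.
   Context: The Ext-quiver of $\mathcal{M}^H$ has vertex set $G(H)$ and $\dim P(g,h)/\mathbb{K}(g-h)$ arrows $g\to h$, where $P(g,h)=\{x\in H:\Delta(x)=g\otimes x+x\otimes h\}$. *)

(* Defs.v *)
(* Tensors in H (x) H (resp. H (x) H (x) H) are represented by finite formal sums
   (seq of pairs, resp. triples); two formal sums denote the same tensor iff every
   bilinear (resp. trilinear) form H x H -> K takes the same value on them
   (bilinear forms separate points of H (x) H over a field). *)
From HB Require Import structures.
From mathcomp Require Import all_boot all_order all_algebra.
Set Implicit Arguments. Unset Strict Implicit. Unset Printing Implicit Defensive.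
Import Order.TTheory GRing.Theory.
Local Open Scope ring_scope.

Section Hopf.
Variables (K : fieldType) (H : algType K).

Definition bilinear_form (b : H -> H -> K) : Prop :=
  (forall (a : K) (x y z : H), b (a *: x + y) z = a * b x z + b y z) /\
  (forall (a : K) (x y z : H), b z (a *: x + y) = a * b z x + b z y).

Definition trilinear_form (t : H -> H -> H -> K) : Prop :=
  (forall (a : K) (x y u v : H), t (a *: x + y) u v = a * t x u v + t y u v) /\
  (forall (a : K) (x y u v : H), t u (a *: x + y) v = a * t u x v + t u y v) /\
  (forall (a : K) (x y u v : H), t u v (a *: x + y) = a * t u v x + t u v y).

Definition ev2 (b : H -> H -> K) (s : seq (H * H)) : K := \sum_(p <- s) b p.1 p.2.

Definition teq2 (s t : seq (H * H)) : Prop :=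
  forall b, bilinear_form b -> ev2 b s = ev2 b t.

Definition is_hopf (D : H -> seq (H * H)) (e : H -> K) (S : H -> H) : Prop :=
  (forall b, bilinear_form b -> forall (a : K) (x y : H),
      ev2 b (D (a *: x + y)) = a * ev2 b (D x) + ev2 b (D y)) /\
  (forall t, trilinear_form t -> forall x : H,
      \sum_(p <- D x) \sum_(q <- D p.1) t q.1 q.2 p.2 =
      \sum_(p <- D x) \sum_(q <- D p.2) t p.1 q.1 q.2) /\
  (forall (a : K) (x y : H), e (a *: x + y) = a * e x + e y) /\
  (forall x : H, \sum_(p <- D x) e p.1 *: p.2 = x) /\
  (forall x : H, \sum_(p <- D x) e p.2 *: p.1 = x) /\
  (forall b, bilinear_form b -> forall x y : H,
      ev2 b (D (x * y)) =
      \sum_(p <- D x) \sum_(q <- D y) b (p.1 * q.1) (p.2 * q.2)) /\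
  teq2 (D 1) [:: (1, 1)] /\
  (forall x y : H, e (x * y) = e x * e y) /\
  e 1 = 1 /\
  (forall (a : K) (x y : H), S (a *: x + y) = a *: S x + S y) /\
  (forall x : H, \sum_(p <- D x) S p.1 * p.2 = e x *: 1) /\
  (forall x : H, \sum_(p <- D x) p.1 * S p.2 = e x *: 1).

Definition subspace (C : H -> Prop) : Prop :=
  C 0 /\ forall (a : K) (x y : H), C x -> C y -> C (a *: x + y).

Definition subcoalgebra (D : H -> seq (H * H)) (C : H -> Prop) : Prop :=
  subspace C /\
  forall x, C x -> exists s : seq (H * H),
      (forall p, p \in s -> C p.1 /\ C p.2) /\ teq2 (D x) s.

Definition simple_subcoalgebra (D : H -> seq (H * H)) (C : H -> Prop) : Prop :=
  subcoalgebra D C /\ (exists x, C x /\ x <> 0) /\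
  forall C' : H -> Prop, subcoalgebra D C' -> (forall x, C' x -> C x) ->
    (forall x, C' x -> x = 0) \/ (forall x, C x -> C' x).

Definition pointed (D : H -> seq (H * H)) : Prop :=
  forall C, simple_subcoalgebra D C ->
    exists c : H, c <> 0 /\ forall x, C x <-> exists a : K, x = a *: c.

Definition grouplike (D : H -> seq (H * H)) (g : H) : Prop :=
  g <> 0 /\ teq2 (D g) [:: (g, g)].

Definition skewprim (D : H -> seq (H * H)) (g h x : H) : Prop :=
  teq2 (D x) [:: (g, x); (x, h)].

(* B is a set of representatives in P(g,h) of a basis of P(g,h)/K(g-h):
   the arrows g -> h of the Ext-quiver are indexed by the elements of B. *)
Definition quotient_basis (D : H -> seq (H * H)) (g h : H) (B : H -> Prop) : Prop :=
  (forall b, B b -> skewprim D g h b) /\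
  (forall (s : seq (K * H)) (c : K),
      uniq (map snd s) -> (forall p, p \in s -> B p.2) ->
      \sum_(p <- s) p.1 *: p.2 = c *: (g - h) ->
      forall p, p \in s -> p.1 = 0) /\
  (forall x, skewprim D g h x ->
      exists (s : seq (K * H)) (c : K),
        (forall p, p \in s -> B p.2) /\
        x = \sum_(p <- s) p.1 *: p.2 + c *: (g - h)).

Definition set_bijective (T : Type) (A B : T -> Prop) : Prop :=
  exists (f g : T -> T),
    (forall x, A x -> B (f x)) /\ (forall y, B y -> A (g y)) /\
    (forall x, A x -> g (f x) = x) /\ (forall y, B y -> f (g y) = y).

End Hopf.

(* Main.v *)
Require Import Defs.
From HB Require Import structures.
From mathcomp Require Import all_boot all_order all_algebra.
From mathcomp Require Import boolp classical_sets functions cardinality.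
Local Open Scope ring_scope.

Module Aux.
Set Implicit Arguments. Unset Strict Implicit. Unset Printing Implicit Defensive.
Import Order.TTheory GRing.Theory.
Local Open Scope classical_set_scope. Local Open Scope ring_scope.

Lemma uniq_map_inj (T U : eqType) (f : T -> U) (s : seq T) p q :
  uniq (map f s) -> p \in s -> q \in s -> f p = f q -> p = q.
Proof.
elim: s => //= a s IH /andP[nin u]; rewrite !inE.
move=> /predU1P[->|ps] /predU1P[->|qs] e //.
- by move: nin; rewrite e (map_f f qs).
- by move: nin; rewrite -e (map_f f ps).
- exact: IH.
Qed.

Section Lin.
Variables (K : fieldType) (V : lmodType K).

Definition comb (s : seq (K * V)) : V := \sum_(p <- s) p.1 *: p.2.
Definition indep (w : V) (A : V -> Prop) : Prop :=
  forall (s : seq (K * V)) (c : K),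
      uniq (map snd s) -> (forall p, p \in s -> A p.2) ->
      \sum_(p <- s) p.1 *: p.2 = c *: w ->
      forall p, p \in s -> p.1 = 0.
Definition span (w : V) (A : V -> Prop) (x : V) : Prop :=
  exists (s : seq (K * V)) (c : K),
        (forall p, p \in s -> A p.2) /\
        x = \sum_(p <- s) p.1 *: p.2 + c *: w.

Lemma normalize (s : seq (K * V)) : exists s' : seq (K * V),
  [/\ uniq (map snd s'), {subset map snd s' <= map snd s} & comb s' = comb s].
Proof.
elim: s => [|[c y] s [s' [u sub e]]]; first by exists [::].
exists ((c + \sum_(q <- s' | q.2 == y) q.1, y) :: [seq q <- s' | q.2 != y]).
split.
- rewrite /= ; apply/andP; split.
    by apply/mapP => -[q]; rewrite mem_filter => /andP[/negP ne _] ey; apply: ne; rewrite ey.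
  apply: (subseq_uniq _ u); apply: map_subseq; exact: filter_subseq.
- move=> z; rewrite /= !inE => /predU1P[->|]; first by rewrite eqxx.
  move=> /mapP[q]; rewrite mem_filter => /andP[_ qs] ->.
  by rewrite sub ?orbT //; apply: map_f.
- rewrite /comb !big_cons /= -/(comb s) -e /comb [in RHS](bigID (fun q => q.2 == y)) /=.
  rewrite big_filter scalerDl -addrA; congr (_ + (_ + _)).
  rewrite scaler_suml; apply: eq_bigr => q /eqP -> //.
Qed.

Lemma span_in w (A : V -> Prop) x : A x -> span w A x.
Proof.
move=> Ax; exists [:: (1, x)], 0; split; first by move=> p; rewrite inE => /eqP ->.
by rewrite big_cons big_nil scale0r !addr0 scale1r.
Qed.

Lemma span_w w (A : V -> Prop) : span w A w.
Proof. by exists [::], 1; split => //; rewrite big_nil add0r scale1r. Qed.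

Lemma span_0 w (A : V -> Prop) : span w A 0.
Proof. by exists [::], 0; split => //; rewrite big_nil add0r scale0r. Qed.

Lemma span_closed w (A : V -> Prop) a x y :
  span w A x -> span w A y -> span w A (a *: x + y).
Proof.
move=> [s1 [c1 [h1 ->]]] [s2 [c2 [h2 ->]]].
exists ([seq (a * p.1, p.2) | p <- s1] ++ s2), (a * c1 + c2); split.
  move=> p; rewrite mem_cat => /orP[|/h2] //. move=> /mapP[q qs pe]; rewrite pe; apply: (h1 q qs).
rewrite big_cat big_map /= scalerDr scaler_sumr scalerDl [a *: (c1 *: w)]scalerA.
have -> : \sum_(i <- s1) a *: (i.1 *: i.2) = \sum_(i <- s1) (a * i.1) *: i.2.
  by apply: eq_bigr => i _; rewrite scalerA.
by rewrite [RHS]addrACA.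
Qed.

Lemma span_comb w (A : V -> Prop) (s : seq (K * V)) :
  (forall p, p \in s -> span w A p.2) -> span w A (\sum_(p <- s) p.1 *: p.2).
Proof.
elim: s => [|p s IH] hs; first by rewrite big_nil; apply: span_0.
rewrite big_cons; apply: span_closed; first by apply: hs; rewrite inE eqxx.
by apply: IH => q qs; apply: hs; rewrite inE qs orbT.
Qed.

Lemma span_trans w (A C : V -> Prop) x :
  (forall y, A y -> span w C y) -> span w A x -> span w C x.
Proof.
move=> hAC [s [c [hs ->]]].
rewrite -[\sum_(p <- s) _]scale1r; apply: span_closed.
  by apply: span_comb => p /hs /hAC.
by rewrite -[c *: w]addr0; apply: span_closed; [apply: span_w|apply: span_0].
Qed.

Lemma indep_sub w (A A' : V -> Prop) :
  (forall y, A y -> A' y) -> indep w A' -> indep w A.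
Proof. by move=> sub hi s c u hs; apply: hi => // p /hs /sub. Qed.

Lemma indep_add w (C : V -> Prop) x :
  indep w C -> ~ span w C x -> indep w (fun y => C y \/ y = x).
Proof.
move=> hi nsp s c u hs hcomb.
set s1 := [seq q <- s | q.2 != x].
set d := \sum_(q <- s | q.2 == x) q.1.
have e1 : \sum_(p <- s) p.1 *: p.2 = d *: x + \sum_(p <- s1) p.1 *: p.2.
  rewrite (bigID (fun q => q.2 == x)) /= big_filter; congr (_ + _).
  by rewrite /d scaler_suml; apply: eq_bigr => q /eqP ->.
have hs1 : forall p, p \in s1 -> C p.2.
  move=> p; rewrite mem_filter => /andP[/eqP ne /hs] [] //.
have u1 : uniq (map snd s1).
  by apply: (subseq_uniq _ u); apply: map_subseq; exact: filter_subseq.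
have [d0|dn0] := eqVneq d 0.
  have z1 : forall p, p \in s1 -> p.1 = 0.
    by apply: (hi _ c) => //; rewrite -hcomb e1 d0 scale0r add0r.
  move=> p ps; have [px|pnx] := eqVneq p.2 x; last first.
    by apply: z1; rewrite mem_filter pnx.
  have us : uniq s := map_uniq u.
  have ps2 : p \in [seq q <- s | q.2 == x] by rewrite mem_filter px eqxx.
  move: d0; rewrite /d -big_filter (bigD1_seq p) //=; last exact: filter_uniq.
  rewrite big1_seq ?addr0 // => q /andP[qp]; rewrite mem_filter => /andP[/eqP qx qs].
  exfalso; move/negP: qp; apply; apply/eqP.
  by apply: (uniq_map_inj (f := snd) u) => //; rewrite qx px.
exfalso; apply: nsp.
have ex : x = (- d^-1) *: (\sum_(p <- s1) p.1 *: p.2) + (d^-1 * c) *: w.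
  apply: (@scalerI _ _ d) => //.
  rewrite scalerDr !scalerA mulrN mulfV // mulrA mulfV // !mul1r scaleN1r.
  by rewrite -hcomb e1 addrC addrK.
rewrite ex; apply: span_closed; first by apply: span_comb => p /hs1; apply: span_in.
by rewrite -[X in span _ _ X]addr0; apply: span_closed; [apply: span_w|apply: span_0].
Qed.

Lemma indep_notin w (C : V -> Prop) a :
  indep w C -> C a -> ~ span w (fun y => C y /\ y <> a) a.
Proof.
move=> hi Ca [s [c [hs ea]]]; have [s' [u sub e]] := normalize s.
have hs' : forall p, p \in s' -> C p.2 /\ p.2 <> a.
  move=> p ps; have /sub /mapP[q qs ->] : p.2 \in map snd s' by apply: map_f.
  exact: hs.
suff h : (-1 : K) = 0 by move/eqP: h; rewrite oppr_eq0 oner_eq0.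
apply: (hi ((-1, a) :: s') (- c) _ _ _ (-1, a) (mem_head _ _)).
- rewrite /= u andbT; apply/mapP => -[q /hs' [_ qa] aq]; exact: qa (esym aq).
- by move=> p; rewrite inE => /predU1P[->|/hs' []].
- rewrite big_cons /= -/(comb s') e /comb scaleN1r scaleNr.
  by rewrite {1}ea opprD addrC addrA addrN add0r.
Qed.

Definition CG (A : V -> Prop) (G : set (V * V)) (y : V) : Prop :=
  (exists a, G (a, y)) \/ (A y /\ forall b, ~ G (y, b)).

Definition goodG w (A Bs : V -> Prop) (G : set (V * V)) : Prop :=
  [/\ (forall a b, G (a, b) -> A a /\ Bs b),
      (forall a b b', G (a, b) -> G (a, b') -> b = b'),
      (forall a a' b, G (a, b) -> G (a', b) -> a = a'),
      (forall a0 y, G (a0, y) -> A y -> exists b, G (y, b)) &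
      indep w (CG A G)].

Lemma exchange w (A Bs : V -> Prop) :
  indep w A -> (forall a, A a -> span w Bs a) ->
  exists f : V -> V, (forall a, A a -> Bs (f a)) /\
    (forall a a', A a -> A a' -> f a = f a' -> a = a').
Proof.
move=> hA hAB.
have P0 : goodG w A Bs set0.
  split => //; apply: (indep_sub _ hA) => y [[? []]|[]//].
have chain : forall F : set (set (V * V)), F `<=` goodG w A Bs -> total_on F subset ->
    goodG w A Bs (\bigcup_(X in F) X).
  move=> F FP Ftot; set U := \bigcup_(X in F) X.
  have two : forall X Y p q, F X -> F Y -> X p -> Y q ->
      exists Z, [/\ F Z, Z p & Z q].
    move=> X Y p q FX FY Xp Yq; have [XY|YX] := Ftot _ _ FX FY.
      by exists Y; split => //; apply: XY.
    by exists X; split => //; apply: YX.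
  split.
  - by move=> a b [X FX Xab]; have [] := FP _ FX; move=> h *; apply: h Xab.
  - move=> a b b' [X FX Xab] [Y FY Yab']; have [Z [FZ Za Zb]] := two _ _ _ _ FX FY Xab Yab'.
    by have [_ h _ _ _] := FP _ FZ; apply: h Za Zb.
  - move=> a a' b [X FX Xab] [Y FY Yab']; have [Z [FZ Za Zb]] := two _ _ _ _ FX FY Xab Yab'.
    by have [_ _ h _ _] := FP _ FZ; apply: h Za Zb.
  - move=> a0 y [X FX Xay] Ay; have [_ _ _ h _] := FP _ FX.
    by have [b Xyb] := h _ _ Xay Ay; exists b; exists X.
  - move=> s c u hs.
    pose good (G : set (V * V)) y := (exists a, G (a, y)) \/ (A y /\ forall b, ~ U (y, b)).
    have [G [PG GU sG]] : exists G, [/\ goodG w A Bs G, (G = set0 \/ F G) &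
         forall p, p \in s -> good G p.2].
      elim: s {u} hs => [|p s IH] hs.
        by exists set0; split => //; left.
      have [|G [PG GU sG]] := IH; first by move=> q qs; apply: hs; rewrite inE qs orbT.
      have [[a [X FX Xay]]|[Ay nU]] := hs p (mem_head _ _).
        case: GU => [G0|FG].
          exists X; split; [exact: FP| by right|].
          move=> q; rewrite inE => /predU1P[->|qs]; first by left; exists a.
          by case: (sG q qs) => [[a' ]|]; [rewrite G0|right].
        have [XG|GX] := Ftot _ _ FX FG.
          exists G; split => //; first by right.
          move=> q; rewrite inE => /predU1P[->|qs]; first by left; exists a; apply: XG.
          exact: sG.
        exists X; split; [exact: FP|by right|].
        move=> q; rewrite inE => /predU1P[->|qs]; first by left; exists a.
        by case: (sG q qs) => [[a' Ga']|]; [left; exists a'; apply: GX|right].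
      exists G; split => // q; rewrite inE => /predU1P[->|qs]; last exact: sG.
      by right.
    have [_ _ _ _ hi] := PG; apply: (hi _ c) => // p /sG [|[Ay nU]]; first by left.
    right; split => // b Gb; apply: (nU b).
    by case: GU => [G0|FG]; [move: Gb; rewrite G0|exists G].
have [G [PG Gmax]] := Zorn_bigcup chain.
have [hG1 hG2 hG3 hG4 hG5] := PG.
have dom : forall a, A a -> exists b, G (a, b).
  move=> a Aa; apply: contrapT => nb.
  have nb' : forall b, ~ G (a, b) by move=> b Gab; apply: nb; exists b.
  set C1 := fun y => CG A G y /\ y <> a.
  have [b [Bb nsp]] : exists b, Bs b /\ ~ span w C1 b.
    apply: contrapT => hn.
    have hsp : forall b, Bs b -> span w C1 b.
      by move=> b Bb; apply: contrapT => nsp; apply: hn; exists b.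
    apply: (indep_notin hG5 (or_intror (conj Aa nb'))).
    exact: span_trans hsp (hAB a Aa).
  have C1b : ~ C1 b by move=> C1b; apply: nsp; apply: span_in.
  have naim : forall a0, ~ G (a0, a).
    by move=> a0 Ga0; have [b' Gab'] := hG4 _ _ Ga0 Aa; apply: (nb' b').
  set G' := fun p => G p \/ p = (a, b).
  apply: (Gmax G').
    split; first by move=> p Gp; left.
    by move=> sub; apply: (nb' b); apply: sub; right.
  split.
  - move=> a1 b1 [/hG1 //|[-> ->]]; split => //.
  - move=> a1 b1 b2 [G1|[e1 e2]] [G2|[e3 e4]]; subst.
    + exact: hG2 G1 G2.
    + by case: (nb' _ G1).
    + by case: (nb' _ G2).
    + by [].
  - move=> a1 a2 b1 [G1|[e1 e2]] [G2|[e3 e4]]; subst.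
    + exact: hG3 G1 G2.
    + by case: C1b; split; [left; exists a1| move=> ba; subst; apply: (naim a1)].
    + by case: C1b; split; [left; exists a2| move=> ba; subst; apply: (naim a2)].
    + by [].
  - move=> a0 y [Gy|[e1 e2]] Ay; subst.
      by have [b' Gb'] := hG4 _ _ Gy Ay; exists b'; left.
    have [->|bna] := pselect (b = a); first by exists b; right.
    have [[b' Gb']|nG] := pselect (exists b', G (b, b')); first by exists b'; left.
    by case: C1b; split => //; right; split => // b' Gb'; apply: nG; exists b'.
  - apply: (@indep_sub w (CG A G') (fun y => C1 y \/ y = b)); last first.
      by apply: indep_add => //; apply: (indep_sub _ hG5) => y [] *.
    move=> y [[a1 [G1|[e1 e2]]]|[Ay nG]].
    + left; split; first by left; exists a1.
      by move=> ya; subst; apply: (naim a1).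
    + by right.
    + left; split.
        by right; split => // b' Gb'; apply: (nG b'); left.
      by move=> ya; subst; apply: (nG b); right.
have /choice [f hf] : forall a, exists b, A a -> G (a, b).
  move=> a; have [Aa|nAa] := pselect (A a); last by exists a.
  by have [b Gab] := dom a Aa; exists b.
exists f; split.
  by move=> a Aa; have [] := hG1 _ _ (hf a Aa).
move=> a a' Aa Aa' e; apply: (hG3 _ _ (f a) (hf a Aa)).
by rewrite e; apply: hf.
Qed.

End Lin.

Section Sep.
Variables (K : fieldType) (V : lmodType K).

Lemma sep (x : V) : x != 0 -> exists phi : V -> K,
  (forall a y z, phi (a *: y + z) = a * phi y + phi z) /\ phi x = 1.
Proof.
move=> xn0.
pose P (M : set V) := (forall a y z, M y -> M z -> M (a *: y + z)) /\ ~ M x.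
have chain : forall F : set (set V), F `<=` P -> total_on F subset ->
    P (\bigcup_(X in F) X).
  move=> F FP Ftot; split.
    move=> a y z [X FX Xy] [Y FY Yz]; have [XY|YX] := Ftot _ _ FX FY.
      by exists Y => //; apply: (FP _ FY).1 => //; apply: XY.
    by exists X => //; apply: (FP _ FX).1 => //; apply: YX.
  by move=> [X FX Xx]; apply: (FP _ FX).2.
have [M [[Mcl Mx] Mmax]] := Zorn_bigcup chain.
have M0 : M 0.
  apply: contrapT => nM0; apply: (Mmax [set 0]).
    split; first by move=> m Mm; case: nM0; rewrite -(addNr m) -scaleN1r; apply: Mcl.
    by move=> h; apply: nM0; apply: h.
  split; first by move=> a y z -> ->; rewrite scaler0 addr0.
  by move=> x0; move: xn0; rewrite x0 eqxx.
have Mscale : forall a y, M y -> M (a *: y) by move=> a y My; rewrite -[_ *: _]addr0; apply: Mcl.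
have Madd : forall y z, M y -> M z -> M (y + z) by move=> y z My Mz; rewrite -[y]scale1r; apply: Mcl.
have decomp : forall y, exists c, M (y - c *: x).
  move=> y; have [My|nMy] := pselect (M y); first by exists 0; rewrite scale0r subr0.
  pose M' := fun z => exists m c, M m /\ z = m + c *: y.
  have : ~ P M'.
    apply: Mmax; split; first by move=> m Mm; exists m, 0; rewrite scale0r addr0.
    by move=> h; apply: nMy; apply: h; exists 0, 1; rewrite add0r scale1r.
  move=> nP; have [m [c [Mm xe]]] : M' x.
    apply: contrapT => nM'x; apply: nP; split => // a u v [m1 [c1 [Mm1 ->]]] [m2 [c2 [Mm2 ->]]].
    exists (a *: m1 + m2), (a * c1 + c2); split; first by apply: Mcl.
    by rewrite scalerDr scalerDl scalerA addrACA.
  have cn0 : c != 0.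
    by apply/eqP => c0; apply: Mx; rewrite xe c0 scale0r addr0.
  exists c^-1; rewrite xe scalerDr scalerA mulVf // scale1r opprD addrCA addrN addr0.
  by rewrite -scaleNr; apply: Mscale.
have uniqc : forall y c c', M (y - c *: x) -> M (y - c' *: x) -> c = c'.
  move=> y c c' h1 h2; apply/eqP; apply: contraT => ne.
  have : M ((c' - c) *: x).
    have -> : (c' - c) *: x = (y - c *: x) + (-1) *: (y - c' *: x).
      by rewrite scaleN1r opprB [RHS]addrC [RHS]addrA subrK scalerBl.
    by apply: Madd => //; apply: Mscale.
  move/(Mscale (c' - c)^-1); rewrite scalerA mulVf ?scale1r // subr_eq0 eq_sym //.
have /choice [phi hphi] := decomp.
exists phi; split.
  move=> a y z; apply: (uniqc (a *: y + z)) => //.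
  rewrite scalerDl -scalerA opprD addrACA -scalerBr.
  by apply: Mcl.
by apply: (uniqc x) => //; rewrite scale1r subrr.
Qed.

Lemma lin0 (phi : V -> K) : (forall a y z, phi (a *: y + z) = a * phi y + phi z) -> phi 0 = 0.
Proof.
move=> hl; have := hl 1 0 0; rewrite scale1r addr0 mul1r => h.
by apply: (@addrI _ (phi 0)); rewrite addr0 -h.
Qed.

Lemma linD (phi : V -> K) : (forall a y z, phi (a *: y + z) = a * phi y + phi z) ->
  forall y z, phi (y + z) = phi y + phi z.
Proof. by move=> hl y z; rewrite -[y]scale1r hl mul1r scale1r. Qed.

Lemma linB (phi : V -> K) : (forall a y z, phi (a *: y + z) = a * phi y + phi z) ->
  forall y z, phi (y - z) = phi y - phi z.
Proof. by move=> hl y z; rewrite addrC -scaleN1r hl mulN1r addrC. Qed.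

Lemma linsum (phi : V -> K) : (forall a y z, phi (a *: y + z) = a * phi y + phi z) ->
  forall (I : Type) (s : seq I) (G : I -> V),
  phi (\sum_(i <- s) G i) = \sum_(i <- s) phi (G i).
Proof.
move=> hl I s G; elim: s => [|i s IH]; first by rewrite !big_nil lin0.
by rewrite !big_cons linD // IH.
Qed.

End Sep.

Section HopfSec.
Variables (K : fieldType) (H : algType K).
Variables (D : H -> seq (H * H)) (e : H -> K) (S : H -> H).
Hypothesis hopf : is_hopf D e S.

Lemma ev2_1 (b : H -> H -> K) g : ev2 b [:: (g, g)] = b g g.
Proof. by rewrite /ev2 big_cons big_nil addr0. Qed.

Lemma ev2_2 (b : H -> H -> K) g x h : ev2 b [:: (g, x); (x, h)] = b g x + b x h.
Proof. by rewrite /ev2 !big_cons big_nil addr0. Qed.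

Lemma bil_comp (b : H -> H -> K) (k : H) : bilinear_form b ->
  bilinear_form (fun u z => b (k * u) (k * z)).
Proof.
move=> [hl hr]; split => a x y z; rewrite mulrDr -scalerAr; [apply: hl|apply: hr].
Qed.

Lemma Fbil (b : H -> H -> K) (y : H) : bilinear_form b ->
  bilinear_form (fun u w => \sum_(q <- D y) b (u * q.1) (w * q.2)).
Proof.
move=> [hl hr]; split => a x y0 z; rewrite mulr_sumr -big_split; apply: eq_bigr => q _.
  by rewrite mulrDl -scalerAl hl.
by rewrite mulrDl -scalerAl hr.
Qed.

Lemma kmul k y (b : H -> H -> K) : grouplike D k -> bilinear_form b ->
  ev2 b (D (k * y)) = ev2 (fun u z => b (k * u) (k * z)) (D y).
Proof.
move=> [_ gk] hb.
have [_ [_ [_ [_ [_ [mult _]]]]]] := hopf.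
rewrite (mult _ hb).
have := gk _ (Fbil y hb); rewrite ev2_1 /ev2 => ->.
by [].
Qed.

Lemma transferV (s t : seq (H * H)) (F : H -> H -> H) :
  (forall a x y z, F (a *: x + y) z = a *: F x z + F y z) ->
  (forall a x y z, F z (a *: x + y) = a *: F z x + F z y) ->
  teq2 s t -> \sum_(p <- s) F p.1 p.2 = \sum_(p <- t) F p.1 p.2.
Proof.
move=> Fl Fr st; apply/eqP; apply: contraT; rewrite -subr_eq0 => ne.
have [phi [hl h1]] := sep ne.
have hb : bilinear_form (fun u z => phi (F u z)).
  by split => a x y z; rewrite ?Fl ?Fr hl.
have := st _ hb; rewrite /ev2 -!linsum // => eq.
by move: h1; rewrite linB // eq subrr => /eqP; rewrite eq_sym oner_eq0.
Qed.

Lemma gl_e g : grouplike D g -> e g = 1.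
Proof.
move=> [gn0 gg].
have [_ [_ [elin [cu1 _]]]] := hopf.
have egg : g = e g *: g.
  have := transferV (F := fun u z => e u *: z) _ _ gg.
  rewrite cu1 big_cons big_nil addr0 /=; apply.
  - by move=> a x y z; rewrite elin scalerDl scalerA.
  - by move=> a x y z; rewrite scalerDr !scalerA mulrC.
have : (e g - 1) *: g == 0 by rewrite scalerBl scale1r -egg subrr.
by rewrite scaler_eq0 => /orP[|/eqP//]; rewrite subr_eq0 => /eqP.
Qed.

Lemma gl_S g : grouplike D g -> S g * g = 1 /\ g * S g = 1.
Proof.
move=> hg; have [gn0 gg] := hg.
have [_ [_ [_ [_ [_ [_ [_ [_ [_ [Slin [anti1 anti2]]]]]]]]]]] := hopf.
split.
  have := transferV (F := fun u z => S u * z) _ _ gg.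
  rewrite anti1 gl_e // scale1r big_cons big_nil addr0 /= => <- //.
  - by move=> a x y z; rewrite Slin mulrDl scalerAl.
  - by move=> a x y z; rewrite mulrDr scalerAr.
have := transferV (F := fun u z => u * S z) _ _ gg.
rewrite anti2 gl_e // scale1r big_cons big_nil addr0 /= => <- //.
- by move=> a x y z; rewrite mulrDl scalerAl.
- by move=> a x y z; rewrite Slin mulrDr scalerAr.
Qed.

Lemma gl_mul g h : grouplike D g -> grouplike D h -> grouplike D (g * h).
Proof.
move=> hg hh; split.
  move=> gh0; have [hn0 _] := hh; apply: hn0.
  by have [Sg _] := gl_S hg; rewrite -[h]mul1r -Sg -mulrA gh0 mulr0.
move=> b hb; rewrite kmul // ev2_1.
by have [_ ->] := hh; [rewrite ev2_1 | apply: bil_comp].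
Qed.

Lemma gl_inv g : grouplike D g -> grouplike D (S g).
Proof.
move=> hg; have [Sg gS] := gl_S hg; split.
  by move=> S0; move: gS; rewrite S0 mulr0 => /eqP; rewrite eq_sym oner_eq0.
move=> b hb; rewrite ev2_1.
have [_ [_ [_ [_ [_ [_ [D1 _]]]]]]] := hopf.
have hb' := bil_comp (S g) hb.
have := kmul (S g) hg hb'; rewrite gS D1 // ev2_1 !mulr1 => ->.
by rewrite /ev2; apply: eq_bigr => p _; rewrite !mulrA Sg !mul1r.
Qed.

Lemma skew_mul k g h x : grouplike D k -> skewprim D g h x ->
  skewprim D (k * g) (k * h) (k * x).
Proof.
move=> hk hx b hb; rewrite kmul // ev2_2.
by rewrite hx ?ev2_2 //; apply: bil_comp.
Qed.

End HopfSec.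

Section PP.
Variables (K : fieldType) (H : algType K).
Definition HH : Type := (H * H)%type.
HB.instance Definition _ := Choice.on HH.
HB.instance Definition _ := isPointed.Build HH (0, 0).
End PP.

Section MainSec.
Variables (K : fieldType) (H : algType K).
Variables (D : H -> seq (H * H)) (e : H -> K) (S : H -> H).
Hypothesis hopf : is_hopf D e S.
Variable B : H -> H -> H -> Prop.
Hypothesis hB : forall g h, grouplike D g -> grouplike D h -> quotient_basis D g h (B g h).

Lemma inj_step g h k : grouplike D g -> grouplike D h -> grouplike D k ->
  exists f : H -> H, (forall b, B g h b -> B (k * g) (k * h) (f b)) /\
    (forall b b', B g h b -> B g h b' -> f b = f b' -> b = b').
Proof.
move=> hg hh hk.
have [Sk kS] := gl_S hopf hk.
have [qb1 [qb2 qb3]] := hB hg hh.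
have [qc1 [qc2 qc3]] := hB (gl_mul hopf hk hg) (gl_mul hopf hk hh).
pose A' y := exists b, B g h b /\ y = k * b.
have kinj : forall x y, k * x = k * y -> x = y.
  by move=> x y exy; rewrite -[x]mul1r -[y]mul1r -Sk -!mulrA exy.
have indA : indep (k * g - k * h) A'.
  move=> s c u hs hc p ps.
  pose s' := map (fun q => (q.1, S k * q.2)) s.
  apply: (qb2 s' c _ _ _ (p.1, S k * p.2) (map_f (fun q => (q.1, S k * q.2)) ps)).
  - have -> : map snd s' = map (fun y => S k * y) (map snd s) by rewrite /s' -!map_comp.
    rewrite map_inj_uniq // => x y exy.
    by rewrite -[x]mul1r -[y]mul1r -kS -!mulrA exy.
  - move=> q /mapP[r rs ->] /=; have [b [Bb ->]] := hs r rs.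
    by rewrite mulrA Sk mul1r.
  - rewrite big_map /=.
    under eq_bigr do rewrite scalerAr.
    by rewrite -mulr_sumr hc -scalerAr mulrBr !mulrA Sk !mul1r.
have spA : forall y, A' y -> span (k * g - k * h) (B (k * g) (k * h)) y.
  by move=> y [b [Bb ->]]; apply: qc3; apply: (skew_mul hopf) => //; apply: qb1.
have [f0 [f0B f0inj]] := exchange indA spA.
exists (fun b => f0 (k * b)); split.
  by move=> b Bb; apply: f0B; exists b.
move=> b b' Bb Bb' eb; apply: kinj; apply: f0inj eb; [exists b|exists b'] => //.
Qed.

End MainSec.


End Aux.
Import Aux.
Import GRing.Theory.

Theorem lemma4p3 (K : fieldType) (H : algType K)
  (D : H -> seq (H * H)) (e : H -> K) (S : H -> H)
  (hopf : is_hopf D e S) (hpt : pointed D)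
  (B : H -> H -> H -> Prop)
  (hB : forall g h, grouplike D g -> grouplike D h -> quotient_basis D g h (B g h))
  (v : H) (hv : grouplike D v) :
  set_bijective
    (fun p : H * H => grouplike D p.1 /\ B p.1 v p.2)
    (fun p : H * H => grouplike D p.1 /\ B v p.1 p.2).
Proof.
have [Sv vS] := gl_S hopf hv.
have Sinj : forall g g', grouplike D g -> grouplike D g' ->
    v * S g * v = v * S g' * v -> g = g'.
  move=> g g' hg hg' eq.
  have eS : S g = S g'.
    have cx : forall x, S v * (v * x * v) * S v = x.
      by move=> x; rewrite !mulrA Sv mul1r -mulrA vS mulr1.
    by rewrite -(cx (S g)) eq cx.
  have [Sg gS] := gl_S hopf hg; have [Sg' gS'] := gl_S hopf hg'.
  by rewrite -[g]mulr1 -Sg' -eS mulrA gS mul1r.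
have /choice [f1 hf1] : forall g, exists f : H -> H, grouplike D g ->
    (forall b, B g v b -> B v (v * S g * v) (f b)) /\
    (forall b b', B g v b -> B g v b' -> f b = f b' -> b = b').
  move=> g; have [hg|] := pselect (grouplike D g); last by exists id.
  have [Sg _] := gl_S hopf hg.
  have [f hf] := inj_step hopf hB hg hv (gl_mul hopf hv (gl_inv hopf hg)).
  by exists f => _; rewrite -mulrA Sg mulr1 in hf.
have /choice [f2 hf2] : forall h, exists f : H -> H, grouplike D h ->
    (forall b, B v h b -> B (v * S h * v) v (f b)) /\
    (forall b b', B v h b -> B v h b' -> f b = f b' -> b = b').
  move=> h; have [hh|] := pselect (grouplike D h); last by exists id.
  have [Sh _] := gl_S hopf hh.
  have [f hf] := inj_step hopf hB hv hh (gl_mul hopf hv (gl_inv hopf hh)).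
  by exists f => _; rewrite -[v * S h * h]mulrA Sh mulr1 in hf.
have glc : forall g, grouplike D g -> grouplike D (v * S g * v).
  by move=> g hg; apply: (gl_mul hopf) => //; apply: (gl_mul hopf) => //; apply: (gl_inv hopf).
pose L : set (HH H) := fun p => grouplike D p.1 /\ B p.1 v p.2.
pose R : set (HH H) := fun p => grouplike D p.1 /\ B v p.1 p.2.
have LR : (L #<= R)%card.
  apply/pcard_leP/injfunPex; exists (fun p : HH H => (v * S p.1 * v, f1 p.1 p.2)).
    move=> [g b] [hg Bb] /=; split; first exact: glc.
    by have [h1 _] := hf1 g hg; apply: h1.
  move=> [g b] [g' b'] /set_mem [hg Bb] /set_mem [hg' Bb'] /= [eg eb].
  rewrite /= in hg Bb hg' Bb'; have gg := Sinj _ _ hg hg' eg; subst g'.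
  by have [_ h2] := hf1 g hg; rewrite (h2 _ _ Bb Bb' eb).
have RL : (R #<= L)%card.
  apply/pcard_leP/injfunPex; exists (fun p : HH H => (v * S p.1 * v, f2 p.1 p.2)).
    move=> [g b] [hg Bb] /=; split; first exact: glc.
    by have [h1 _] := hf2 g hg; apply: h1.
  move=> [g b] [g' b'] /set_mem [hg Bb] /set_mem [hg' Bb'] /= [eg eb].
  rewrite /= in hg Bb hg' Bb'; have gg := Sinj _ _ hg hg' eg; subst g'.
  by have [_ h2] := hf2 g hg; rewrite (h2 _ _ Bb Bb' eb).
have /card_set_bijP [phi [phf phinj phsurj]] := Cantor_Bernstein LR RL.
have /choice [psi hpsi] : forall y : HH H, exists x : HH H, R y -> L x /\ phi x = y.
  move=> y; have [Ry|] := pselect (R y); last by exists y.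
  by have [x Lx exy] := phsurj y Ry; exists x.
exists phi, psi; split; [|split; [|split]].
- by move=> x Lx; apply: phf.
- by move=> y Ry; have [] := hpsi y Ry.
- move=> x Lx; have [Lpx ep] := hpsi (phi x) (phf x Lx).
  by apply: phinj; rewrite ?inE //; apply: mem_set.
- by move=> y Ry; have [] := hpsi y Ry.
Qed.
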